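(* Let $G$ be a graph, $U\subseteq V(G)$, and let $P$ be a path $v\,v_2\,v_3\,v_4$ on four new vertices (so $P\cong P_4$ and $v$ is an end vertex). Let $H$ be the graph with $V(H)=V(G)\cup V(P)$ and $E(H)=E(G)\cup E(P)\cup\{uv: u\in U\}$. Then $\overline{H}$ is $N$-AW if and only if $\overline{G\cup P_4}$ is $N$-AW (where $G\cup P_4$ is the disjoint union of $G$ and $P$).
   Context: All graphs are finite and simple; $\overline{X}$ denotes the complement. Labels lie in $\mathbb{Z}_\ell$ for a fixed integer $\ell\ge2$. In the neighborhood Lights Out game on a graph, toggling a vertex $w$ adds $1$ (mod $\ell$) to the label of every vertex in the closed neighborhood $N[w]$; the game is won when all labels are $0$. A graph is $N$-AW if this game can be won from every initial labeling. *)

(* Defs.v *)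
From mathcomp Require Import all_boot all_algebra.
Set Implicit Arguments. Unset Strict Implicit. Unset Printing Implicit Defensive.
Import GRing.Theory.
Local Open Scope ring_scope.

Definition simple_graph (T : finType) (e : rel T) : Prop :=
  symmetric e /\ irreflexive e.

Definition compl (T : finType) (e : rel T) : rel T :=
  fun x y => (x != y) && ~~ e x y.

Definition in_closed_nbhd (T : finType) (e : rel T) (w x : T) : bool :=
  (x == w) || e w x.

(* N-AW over Z_l: from every initial labeling a : T -> Z_l there is a
   sequence of toggles winning the game; since toggles commute, a sequence
   of toggles is recorded by the number of times t w each vertex w is
   toggled.  Toggling w adds 1 to every label in N[w]. *)
Definition N_AW (l : nat) (T : finType) (e : rel T) : Prop :=
  forall a : T -> 'Z_l, exists t : T -> nat,
    forall x : T, a x + \sum_(w : T | in_closed_nbhd e w x) (t w)%:R = 0.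

(* The path P_4 on vertices 0 - 1 - 2 - 3 (vertex 0 is the end vertex v). *)
Definition path4 : rel 'I_4 :=
  fun i j => (i.+1 == j :> nat) || (j.+1 == i :> nat).

Definition union_P4 (T : finType) (e : rel T) : rel (T + 'I_4) :=
  fun x y => match x, y with
             | inl a, inl b => e a b
             | inr i, inr j => path4 i j
             | _, _ => false
             end.

Definition H_graph (T : finType) (e : rel T) (U : {set T}) : rel (T + 'I_4) :=
  fun x y => match x, y with
             | inl a, inl b => e a b
             | inr i, inr j => path4 i j
             | inl u, inr i => (u \in U) && (val i == 0%N)
             | inr i, inl u => (u \in U) && (val i == 0%N)
             end.

(* Main.v *)
Require Import Defs.
From mathcomp Require Import all_boot all_algebra ring.
Set Implicit Arguments. Unset Strict Implicit. Unset Printing Implicit Defensive.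
Import GRing.Theory.
Local Open Scope ring_scope.
Section P1.
Variable l : nat.
Variable V : finType.
Variable E : rel V.
Definition nbs (w x : V) := in_closed_nbhd (compl E) w x.
Definition Fm (t : {ffun V -> 'Z_l}) : {ffun V -> 'Z_l} :=
  [ffun x => \sum_(w | nbs w x) t w].
Definition Ktriv := forall t : V -> 'Z_l,
  (forall x, \sum_(w | nbs w x) t w = 0) -> forall z, t z = 0.

Lemma FmB t1 t2 : Fm (t1 - t2) = Fm t1 - Fm t2.
Proof. by apply/ffunP=> x; rewrite !ffunE -sumrB; apply: eq_bigr => w _; rewrite !ffunE. Qed.

Lemma NAW_K : N_AW l (compl E) -> Ktriv.
Proof.
move=> H.
have surj : forall b, exists t, Fm t = b.
  move=> b; have [t' Ht'] := H (fun x => - b x).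
  exists [ffun w => (t' w)%:R]; apply/ffunP => x; rewrite ffunE.
  have := Ht' x; rewrite addrC => /eqP; rewrite addr_eq0 opprK => /eqP <-.
  by apply: eq_bigr => w _; rewrite ffunE.
pose g b := odflt b [pick t | Fm t == b].
have Fg : forall b, Fm (g b) = b.
  move=> b; rewrite /g; case: pickP => [t /eqP //|].
  by have [t Ht] := surj b => /(_ t); rewrite Ht eqxx.
have ginj : injective g by move=> b1 b2 e12; rewrite -(Fg b1) -(Fg b2) e12.
have [g' gg' g'g] := injF_bij ginj.
have Fg' : forall t, Fm t = g' t by move=> t; rewrite -{1}(g'g t) Fg.
move=> t Ht z.
have : Fm [ffun w => t w] = Fm 0.
  apply/ffunP => x; rewrite !ffunE.
  under eq_bigr => w _ do rewrite ffunE.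
  rewrite Ht; apply/esym/big1 => w _; by rewrite ffunE.
rewrite !Fg' => Heq; have := can_inj g'g Heq => /ffunP /(_ z); by rewrite !ffunE.
Qed.

Lemma K_NAW : (1 < l)%N -> Ktriv -> N_AW l (compl E).
Proof.
move=> hl K.
have Finj : injective Fm.
  move=> t1 t2 /eqP; rewrite -subr_eq0 -FmB => /eqP H0.
  apply/eqP; rewrite -subr_eq0; apply/eqP/ffunP => z.
  transitivity (0 : 'Z_l); last by rewrite ffunE.
  apply: (K (fun w => (t1 - t2) w)) => x.
  have := congr1 (fun f : {ffun V -> 'Z_l} => f x) H0; rewrite /= ffunE => Hx.
  by rewrite Hx ffunE.
have [g Fg gF] := injF_bij Finj.
move=> a; exists (fun w => nat_of_ord (g [ffun x => - a x] w)).
move=> x.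
have : Fm (g [ffun x => - a x]) x = - a x by rewrite gF ffunE.
rewrite ffunE => Hs.
under eq_bigr => w _ do rewrite natr_Zp.
by rewrite Hs subrr.
Qed.
End P1.
Definition o0 : 'I_4 := @Ordinal 4 0 isT.
Definition o1 : 'I_4 := @Ordinal 4 1 isT.
Definition o2 : 'I_4 := @Ordinal 4 2 isT.
Definition o3 : 'I_4 := @Ordinal 4 3 isT.

Lemma sumI4 (R : zmodType) (P : pred 'I_4) (F : 'I_4 -> R) :
  \sum_(j | P j) F j = (if P o0 then F o0 else 0) + (if P o1 then F o1 else 0)
    + (if P o2 then F o2 else 0) + (if P o3 then F o3 else 0).
Proof.
rewrite big_mkcond !big_ord_recl big_ord0 /= addr0 !addrA.
by congr (_ + _ + _ + _); congr (if P _ then F _ else 0); apply/val_inj.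
Qed.

Section P2.
Variable l : nat.
Variable T : finType.
Variable e : rel T.
Variable U : {set T}.
Local Notation Z := 'Z_l.
Local Notation HE := (H_graph e U).
Local Notation UE := (union_P4 e).

Definition MG (x : T -> Z) u := \sum_(w | (u == w) || ((w != u) && ~~ e w u)) x w.

Definition sT (t : T + 'I_4 -> Z) := \sum_(w : T) t (inl w).

Lemma rowH_T (t : T + 'I_4 -> Z) u :
  \sum_(w | nbs HE w (inl u)) t w = MG (fun w => t (inl w)) u +
   ((if u \in U then 0 else t (inr o0)) + t (inr o1) + t (inr o2) + t (inr o3)).
Proof.
rewrite big_sumType /=; congr (_ + _).
by rewrite sumI4 /nbs /in_closed_nbhd /compl /=; case: (u \in U).
Qed.

Lemma rowU_T (t : T + 'I_4 -> Z) u :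
  \sum_(w | nbs UE w (inl u)) t w = MG (fun w => t (inl w)) u +
   (t (inr o0) + t (inr o1) + t (inr o2) + t (inr o3)).
Proof.
rewrite big_sumType /=; congr (_ + _).
by rewrite sumI4 /nbs /in_closed_nbhd /compl /=.
Qed.

Lemma rowH_0 (t : T + 'I_4 -> Z) :
  \sum_(w | nbs HE w (inr o0)) t w = \sum_(w | w \notin U) t (inl w) +
   (t (inr o0) + 0 + t (inr o2) + t (inr o3)).
Proof.
rewrite big_sumType /=; congr (_ + _); last by rewrite sumI4 /nbs /in_closed_nbhd /compl /=.
by apply: eq_bigl => w; rewrite /nbs /in_closed_nbhd /compl /= andbT.
Qed.

Lemma rowU_0 (t : T + 'I_4 -> Z) :
  \sum_(w | nbs UE w (inr o0)) t w = sT t +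
   (t (inr o0) + 0 + t (inr o2) + t (inr o3)).
Proof.
rewrite big_sumType /=; congr (_ + _); last by rewrite sumI4 /nbs /in_closed_nbhd /compl /=.
Qed.

Lemma rowX_j (E : rel (T + 'I_4)) (t : T + 'I_4 -> Z) (j : 'I_4) :
  (forall w, E (inl w) (inr j) = false) ->
  (forall k, E (inr k) (inr j) = path4 k j) ->
  \sum_(w | nbs E w (inr j)) t w = sT t +
   let P k := (j == k) || ((k != j) && ~~ path4 k j) in
   ((if P o0 then t (inr o0) else 0) + (if P o1 then t (inr o1) else 0)
    + (if P o2 then t (inr o2) else 0) + (if P o3 then t (inr o3) else 0)).
Proof.
move=> H1 H2; rewrite big_sumType /=; congr (_ + _).
  by apply: eq_bigl => w; rewrite /nbs /in_closed_nbhd /compl /= H1.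
rewrite sumI4 /nbs /in_closed_nbhd /compl /= !H2 //.
Qed.

Lemma rowH_1 (t : T + 'I_4 -> Z) : \sum_(w | nbs HE w (inr o1)) t w = sT t +
   (0 + t (inr o1) + 0 + t (inr o3)).
Proof. rewrite rowX_j //=; try by move=> w; rewrite /= andbF. Qed.
Lemma rowH_2 (t : T + 'I_4 -> Z) : \sum_(w | nbs HE w (inr o2)) t w = sT t +
   (t (inr o0) + 0 + t (inr o2) + 0).
Proof. rewrite rowX_j //=; try by move=> w; rewrite /= andbF. Qed.
Lemma rowH_3 (t : T + 'I_4 -> Z) : \sum_(w | nbs HE w (inr o3)) t w = sT t +
   (t (inr o0) + t (inr o1) + 0 + t (inr o3)).
Proof. rewrite rowX_j //=; try by move=> w; rewrite /= andbF. Qed.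
Lemma rowU_1 (t : T + 'I_4 -> Z) : \sum_(w | nbs UE w (inr o1)) t w = sT t +
   (0 + t (inr o1) + 0 + t (inr o3)).
Proof. rewrite rowX_j //=; try by move=> w; rewrite /= andbF. Qed.
Lemma rowU_2 (t : T + 'I_4 -> Z) : \sum_(w | nbs UE w (inr o2)) t w = sT t +
   (t (inr o0) + 0 + t (inr o2) + 0).
Proof. rewrite rowX_j //=; try by move=> w; rewrite /= andbF. Qed.
Lemma rowU_3 (t : T + 'I_4 -> Z) : \sum_(w | nbs UE w (inr o3)) t w = sT t +
   (t (inr o0) + t (inr o1) + 0 + t (inr o3)).
Proof. rewrite rowX_j //=; try by move=> w; rewrite /= andbF. Qed.

End P2.
Lemma I4_split (j : 'I_4) : j = o0 \/ j = o1 \/ j = o2 \/ j = o3.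
Proof.
case: j => [[|[|[|[|j]]]] Hj] //.
- by left; apply/val_inj.
- by right; left; apply/val_inj.
- by right; right; left; apply/val_inj.
- by right; right; right; apply/val_inj.
Qed.

Section P3.
Variable l : nat.
Variable T : finType.
Variable e : rel T.
Variable U : {set T}.
Local Notation Z := 'Z_l.
Local Notation HE := (H_graph e U).
Local Notation UE := (union_P4 e).

Definition Cond := forall x : T -> Z,
  (forall u, MG e x u - (\sum_w x w) *+ 2 = 0) -> forall u, x u = 0.

Lemma KH_C : Ktriv l HE -> Cond.
Proof.
move=> K x Hx u.
pose s := \sum_w x w. pose sU := \sum_(w in U) x w.
pose sN := \sum_(w | w \notin U) x w.
have hs : s = sU + sN by rewrite /s (bigID (mem U)).
pose t := fun z : T + 'I_4 => match z return Z with inl w => x w | inr j =>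
   if val j == 0%N then 0 else if val j == 1%N then -s - sU
   else if val j == 2%N then -s else sU end.
suff Ht : forall z, \sum_(w | nbs HE w z) t w = 0 by exact: (K t Ht (inl u)).
case=> [u'|].
  rewrite rowH_T /= if_same.
  have := Hx u'; move/eqP; rewrite subr_eq0 => /eqP Hm.
  transitivity (MG e x u' + (0 + (-s - sU) - s + sU)); first by [].
  rewrite Hm -/s; ring.
move=> j; have [->|[->|[->|->]]] := I4_split j.
- rewrite rowH_0 /= -/sN; rewrite hs; ring.
- rewrite rowH_1 /sT /= -/s; ring.
- rewrite rowH_2 /sT /= -/s; ring.
- rewrite rowH_3 /sT /= -/s; ring.
Qed.

Lemma KU_C : Ktriv l UE -> Cond.
Proof.
move=> K x Hx u.
pose s := \sum_w x w.
pose t := fun z : T + 'I_4 => match z return Z with inl w => x w | inr j =>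
   if val j == 0%N then 0 else if val j == 1%N then -s
   else if val j == 2%N then -s else 0 end.
suff Ht : forall z, \sum_(w | nbs UE w z) t w = 0 by exact: (K t Ht (inl u)).
case=> [u'|].
  rewrite rowU_T /=.
  have := Hx u'; move/eqP; rewrite subr_eq0 => /eqP Hm.
  transitivity (MG e x u' + (0 + -s + -s + 0)); first by [].
  rewrite Hm -/s; ring.
move=> j; have [->|[->|[->|->]]] := I4_split j.
- rewrite rowU_0 /sT /= -/s; ring.
- rewrite rowU_1 /sT /= -/s; ring.
- rewrite rowU_2 /sT /= -/s; ring.
- rewrite rowU_3 /sT /= -/s; ring.
Qed.

Lemma C_KH : Cond -> Ktriv l HE.
Proof.
move=> HC t Ht.
pose x := fun w => t (inl w).
pose s := \sum_w x w.
have e0 := Ht (inr o0); rewrite rowH_0 in e0.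
have e1 := Ht (inr o1); rewrite rowH_1 /sT -/x -/s in e1.
have e2 := Ht (inr o2); rewrite rowH_2 /sT -/x -/s in e2.
have e3 := Ht (inr o3); rewrite rowH_3 /sT -/x -/s in e3.
have ha : t (inr o0) = 0.
  have -> : t (inr o0) = (s + (t (inr o0) + t (inr o1) + 0 + t (inr o3)))
     - (s + (0 + t (inr o1) + 0 + t (inr o3))) by ring.
  by rewrite e3 e1 subrr.
have hx : forall u, x u = 0.
  apply: HC => u.
  have eT := Ht (inl u); rewrite rowH_T ha if_same -/x in eT.
  have -> : MG e x u - (\sum_w x w) *+ 2 =
    (MG e x u + (0 + t (inr o1) + t (inr o2) + t (inr o3)))
    - (s + (0 + t (inr o1) + 0 + t (inr o3)))
    - (s + (t (inr o0) + 0 + t (inr o2) + 0)) + t (inr o0) by rewrite /s; ring.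
  by rewrite eT e1 e2 ha; ring.
have hs : s = 0 by apply: big1 => w _; apply: hx.
have hN : \sum_(w | w \notin U) t (inl w) = 0 by apply: big1 => w _; apply: hx.
rewrite hs ha !add0r in e1 e2 e3; rewrite hN ha !add0r in e0.
rewrite addr0 in e2.
rewrite e2 add0r in e0. rewrite e0 !addr0 in e1.
by case=> [w|]; [apply: hx | move=> j; have [->|[->|[->|->]]] := I4_split j].
Qed.

Lemma C_KU : Cond -> Ktriv l UE.
Proof.
move=> HC t Ht.
pose x := fun w => t (inl w).
pose s := \sum_w x w.
have e0 := Ht (inr o0); rewrite rowU_0 /sT -/x -/s in e0.
have e1 := Ht (inr o1); rewrite rowU_1 /sT -/x -/s in e1.
have e2 := Ht (inr o2); rewrite rowU_2 /sT -/x -/s in e2.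
have e3 := Ht (inr o3); rewrite rowU_3 /sT -/x -/s in e3.
have ha : t (inr o0) = 0.
  have -> : t (inr o0) = (s + (t (inr o0) + t (inr o1) + 0 + t (inr o3)))
     - (s + (0 + t (inr o1) + 0 + t (inr o3))) by ring.
  by rewrite e3 e1 subrr.
have hx : forall u, x u = 0.
  apply: HC => u.
  have eT := Ht (inl u); rewrite rowU_T -/x in eT.
  have -> : MG e x u - (\sum_w x w) *+ 2 =
    (MG e x u + (t (inr o0) + t (inr o1) + t (inr o2) + t (inr o3)))
    - (s + (0 + t (inr o1) + 0 + t (inr o3)))
    - (s + (t (inr o0) + 0 + t (inr o2) + 0)) by rewrite /s; ring.
  by rewrite eT e1 e2; ring.
have hs : s = 0 by apply: big1 => w _; apply: hx.
rewrite hs ha !add0r in e0 e1 e2 e3.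
rewrite addr0 in e2.
rewrite e2 add0r in e0. rewrite e0 !addr0 in e1.
by case=> [w|]; [apply: hx | move=> j; have [->|[->|[->|->]]] := I4_split j].
Qed.
End P3.

Local Close Scope ring_scope.

Theorem theorem3p1 (l : nat) (hl : (1 < l)%N) (T : finType) (e : rel T)
  (hG : simple_graph e) (U : {set T}) :
  N_AW l (compl (H_graph e U)) <-> N_AW l (compl (union_P4 e)).
Proof.
split=> H.
- apply: (K_NAW hl); apply: C_KU; apply: KH_C; exact: NAW_K.
- apply: (K_NAW hl); apply: C_KH; apply: KU_C; exact: NAW_K.
Qed.
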